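(* Let $t\geq 2$ be an integer. There are a positive constant $c$ and $n_0\in\mathbb{N}$ such that for every $n>n_0$: $$\mathrm{IR}(2K_2, K_{1,n}) \leq n + c\, n \log^{-1/4} n,\qquad \mathrm{IR}(P_4, K_{1,n}) \leq n + c\, n\log^{-1/4} n,\qquad \mathrm{IR}(K_{t,t}, K_{1,n}) \leq n + c\, n^{1-\frac{1}{2t}}.$$
   Context: All graphs are finite and simple. $K_{1,n}$ is the star with $n$ edges, $2K_2$ is the disjoint union of two edges, $P_4$ is the path on $4$ vertices, $K_{t,t}$ is the complete bipartite graph with parts of size $t$. For graphs $F$, $H$, $G$, write $F \overset{\text{ind}}{\longrightarrow} (H,G)$ if for every coloring of the edges of $F$ with red and blue there is either a red induced copy of $H$ (a vertex set $S\subseteq V(F)$ with $F[S]\cong H$ and all edges of $F[S]$ red) or a blue induced copy of $G$ (defined analogously with blue). The induced Ramsey number $\mathrm{IR}(H,G)$ is the smallest number of vertices of a graph $F$ with $F \overset{\text{ind}}{\longrightarrow} (H,G)$. *)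

(* Defs.v *)
From mathcomp Require Import all_boot.
From Stdlib Require Import Reals.

Set Implicit Arguments.
Unset Strict Implicit.
Unset Printing Implicit Defensive.

Definition simple_graph (V : finType) (e : rel V) : Prop :=
  (forall x y, e x y = e y x) /\ (forall x, e x x = false).

(* An edge colouring of the graph (V,e) with red (true) / blue (false):
   a symmetric function on pairs of vertices (only its values on edges matter). *)
Definition colouring (V : finType) (col : V -> V -> bool) : Prop :=
  forall x y, col x y = col y x.

Definition mono_induced_copy (V : finType) (e : rel V) (col : V -> V -> bool)
  (b : bool) (W : finType) (h : rel W) : Prop :=
  exists f : W -> V,
    injective f /\
    (forall u v, e (f u) (f v) = h u v) /\
    (forall u v, h u v -> col (f u) (f v) = b).

Definition ind_arrow (V : finType) (e : rel V)
  (W1 : finType) (h : rel W1) (W2 : finType) (g : rel W2) : Prop :=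
  forall col : V -> V -> bool, colouring col ->
    mono_induced_copy e col true h \/ mono_induced_copy e col false g.

(* IR(H,G) <= x : since IR(H,G) is the least number of vertices of a graph F
   with F -ind-> (H,G), the inequality IR(H,G) <= x holds iff some finite simple
   graph F on m <= x vertices (wlog vertex set 'I_m) satisfies F -ind-> (H,G). *)
Definition IR_le (W1 : finType) (h : rel W1) (W2 : finType) (g : rel W2)
  (x : R) : Prop :=
  exists (m : nat) (e : rel 'I_m),
    simple_graph e /\ (INR m <= x)%R /\ ind_arrow e h g.

Definition twoK2 : rel 'I_4 := fun i j =>
  [|| (nat_of_ord i == 0) && (nat_of_ord j == 1), (nat_of_ord i == 1) && (nat_of_ord j == 0),
      (nat_of_ord i == 2) && (nat_of_ord j == 3) | (nat_of_ord i == 3) && (nat_of_ord j == 2)].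

Definition P4 : rel 'I_4 := fun i j =>
  (nat_of_ord i == (nat_of_ord j).+1) || (nat_of_ord j == (nat_of_ord i).+1).

Definition Ktt (t : nat) : rel ('I_t + 'I_t)%type := fun x y =>
  match x, y with
  | inl _, inr _ | inr _, inl _ => true
  | _, _ => false
  end.

Definition star (n : nat) : rel (option 'I_n) := fun x y =>
  match x, y with
  | None, Some _ | Some _, None => true
  | _, _ => false
  end.

(* Main.v *)
Require Import Defs.
From mathcomp Require Import all_boot.
From Stdlib Require Import Reals.
From Stdlib Require Import Lra.
From mathcomp Require Import ssrnat zify.
Set Implicit Arguments.
Unset Strict Implicit.
Unset Printing Implicit Defensive.

Lemma transfer (V : finType) (e : rel V) (W1 : finType) (h : rel W1)
  (W2 : finType) (g : rel W2) (x : R) :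
  simple_graph e -> ind_arrow e h g -> (INR #|V| <= x)%R -> IR_le h g x.
Proof.
move=> [esym eirr] Harr Hx.
exists #|V|, (fun i j => e (enum_val i) (enum_val j)).
split; [split=> [i j|i]; [exact: esym | exact: eirr] | split=> //].
move=> col' Hcol'.
have := Harr (fun x y => col' (enum_rank x) (enum_rank y)) (fun x y => Hcol' _ _).
case=> [[f [finj [fe fc]]]|[f [finj [fe fc]]]]; [left|right];
exists (fun u => enum_rank (f u)); (split; [|split]).
- by move=> u v /enum_rank_inj /finj.
- by move=> u v; rewrite !enum_rankK.
- by move=> u v /fc.
- by move=> u v /enum_rank_inj /finj.
- by move=> u v; rewrite !enum_rankK.
- by move=> u v /fc.
Qed.

Definition bip (A L : finType) (adj : A -> L -> bool) : rel (A + L) :=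
  fun x y => match x, y with
  | inl a, inr b => adj a b
  | inr b, inl a => adj a b
  | _, _ => false end.

Lemma bip_simple (A L : finType) (adj : A -> L -> bool) : simple_graph (bip adj).
Proof. by split=> [[a|b] [a'|b']|[a|b]]. Qed.

Definition Nb (A L : finType) (adj : A -> L -> bool) a := [set b | adj a b].
Definition Rd (A L : finType) (adj : A -> L -> bool) (col : A + L -> A + L -> bool) a :=
  [set b | adj a b && col (inl a) (inr b)].
Definition Bl (A L : finType) (adj : A -> L -> bool) (col : A + L -> A + L -> bool) a :=
  [set b | adj a b && ~~ col (inl a) (inr b)].

Lemma blue_star (A L : finType) (adj : A -> L -> bool) col n a :
  colouring col -> n <= #|Bl adj col a| ->
  mono_induced_copy (bip adj) col false (@star n).
Proof.
move=> Hc Hn.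
pose f (u : option 'I_n) : A + L :=
  match u with None => inl a | Some i => inr (enum_val (widen_ord Hn i)) end.
have Hin : forall i : 'I_n, enum_val (widen_ord Hn i) \in Bl adj col a.
  by move=> i; apply: enum_valP.
exists f; split; [|split].
- move=> [i|] [j|] //= [] // /enum_val_inj /(congr1 val) /= H.
  by congr Some; apply: val_inj.
- move=> [i|] [j|] //=; [move: (Hin i) | move: (Hin j)];
  by rewrite inE => /andP [].
- move=> [i|] [j|] //= _.
    by rewrite Hc; have := Hin i; rewrite inE => /andP [_ /negbTE].
  by have := Hin j; rewrite inE => /andP [_ /negbTE].
Qed.

Lemma red_large (A L : finType) (adj : A -> L -> bool) col n a :
  #|Bl adj col a| < n -> #|Nb adj a| <= #|Rd adj col a| + n.-1.
Proof.
move=> Hb.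
have -> : Nb adj a = Rd adj col a :|: Bl adj col a.
  by apply/setP=> b; rewrite !inE; case: (adj a b); case: (col _ _).
by apply: leq_trans (leq_card_setU _ _) _; rewrite leq_add2l -ltnS (ltn_predK Hb).
Qed.

Lemma ord4_cases (P : 'I_4 -> Prop) :
  P (@Ordinal 4 0 isT) -> P (@Ordinal 4 1 isT) -> P (@Ordinal 4 2 isT) ->
  P (@Ordinal 4 3 isT) -> forall k, P k.
Proof.
move=> H0 H1 H2 H3 [[|[|[|[|k]]]] Hk] //.
- by rewrite (bool_irrelevance Hk isT).
- by rewrite (bool_irrelevance Hk isT).
- by rewrite (bool_irrelevance Hk isT).
- by rewrite (bool_irrelevance Hk isT).
Qed.

Definition f4 (T : Type) (x0 x1 x2 x3 : T) (k : 'I_4) : T :=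
  match nat_of_ord k with 0 => x0 | 1 => x1 | 2 => x2 | _ => x3 end.

Lemma red2K2 (A L : finType) (adj : A -> L -> bool) col i j b b' :
  colouring col -> i != j -> adj i b -> adj j b' -> ~~ adj i b' -> ~~ adj j b ->
  col (inl i) (inr b) -> col (inl j) (inr b') ->
  mono_induced_copy (bip adj) col true twoK2.
Proof.
move=> Hc Hij Hib Hjb' Hib' Hjb Ci Cj.
have Hbb : b != b' by apply/eqP=> E; rewrite -E Hib in Hib'.
have Hb'b : b' != b by rewrite eq_sym.
have Hji : j != i by rewrite eq_sym.
exists (f4 (inl i) (inr b) (inl j) (inr b')); split; [|split].
- move=> u v; elim/ord4_cases: u; elim/ord4_cases: v => //= H;
   first [ by apply: val_inj | by case: H |
     by case: H => /eqP; rewrite ?(negbTE Hij) ?(negbTE Hbb) ?(negbTE Hji) ?(negbTE Hb'b)].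
- move=> u v; elim/ord4_cases: u; elim/ord4_cases: v => //=;
  by rewrite ?Hib ?Hjb' ?(negbTE Hib') ?(negbTE Hjb).
- move=> u v; elim/ord4_cases: u; elim/ord4_cases: v => //= _;
  by rewrite ?Ci ?Cj // Hc.
Qed.

Lemma redP4 (A L : finType) (adj : A -> L -> bool) col i x q p :
  colouring col -> i != x -> adj i q -> adj i p -> adj x p -> ~~ adj x q ->
  col (inl i) (inr q) -> col (inl i) (inr p) -> col (inl x) (inr p) ->
  mono_induced_copy (bip adj) col true P4.
Proof.
move=> Hc Hix Hiq Hip Hxp Hxq C1 C2 C3.
have Hqp : q != p by apply/eqP=> E; rewrite E Hxp in Hxq.
have Hpq : p != q by rewrite eq_sym.
have Hxi : x != i by rewrite eq_sym.
exists (f4 (inr q) (inl i) (inr p) (inl x)); split; [|split].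
- move=> u v; elim/ord4_cases: u; elim/ord4_cases: v => //= H;
   first [ by apply: val_inj | by case: H |
     by case: H => /eqP; rewrite ?(negbTE Hix) ?(negbTE Hqp) ?(negbTE Hxi) ?(negbTE Hpq)].
- move=> u v; elim/ord4_cases: u; elim/ord4_cases: v => //=;
  by rewrite ?Hiq ?Hip ?Hxp ?(negbTE Hxq).
- move=> u v; elim/ord4_cases: u; elim/ord4_cases: v => //= _;
  by rewrite ?C1 ?C2 ?C3 // Hc.
Qed.

Lemma redKtt (A L : finType) (adj : A -> L -> bool) col t (Q : {set A}) (Y : {set L}) :
  colouring col -> t <= #|Q| -> t <= #|Y| ->
  (forall a b, a \in Q -> b \in Y -> adj a b && col (inl a) (inr b)) ->
  mono_induced_copy (bip adj) col true (@Ktt t).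
Proof.
move=> Hc HQ HY H.
pose f (u : 'I_t + 'I_t) : A + L := match u with
  | inl k => inl (enum_val (widen_ord HQ k))
  | inr k => inr (enum_val (widen_ord HY k)) end.
have HinQ : forall k : 'I_t, enum_val (widen_ord HQ k) \in Q by move=> k; apply: enum_valP.
have HinY : forall k : 'I_t, enum_val (widen_ord HY k) \in Y by move=> k; apply: enum_valP.
exists f; split; [|split].
- by move=> [k|k] [l|l] //= [] /enum_val_inj /(congr1 val) /= /val_inj ->.
- move=> [k|k] [l|l] //=.
    by have /andP [] := H _ _ (HinQ k) (HinY l).
  by have /andP [] := H _ _ (HinQ l) (HinY k).
- move=> [k|k] [l|l] //= _.
    by have /andP [] := H _ _ (HinQ k) (HinY l).
  by rewrite Hc; have /andP [] := H _ _ (HinQ l) (HinY k).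
Qed.

Lemma ratio_bin a b r : a <= b -> 'C(a, r) * b ^ r <= 'C(b, r) * a ^ r.
Proof.
move=> ab.
rewrite -(@leq_pmul2r r`!) ?fact_gt0 // mulnAC bin_ffact [X in _ <= X]mulnAC bin_ffact.
elim: r => [|r IH]; first by rewrite !muln1.
rewrite !ffactnSr !expnSr.
have H2 : (a - r) * b <= (b - r) * a.
  rewrite !mulnBl; rewrite [a * b]mulnC; apply: leq_sub2l; exact: leq_mul.
have := leq_mul IH H2.
set u := a - r; set v := b - r; set X := a ^_ r; set Y := b ^_ r.
set Z := a ^ r; set W := b ^ r.
clearbody u v X Y Z W; move=> H; nia.
Qed.

Lemma bern a k : a ^ k * (a + k) <= (a + 1) ^ k * a.
Proof.
elim: k => [|k IH]; first by rewrite expn0 addn0 !mul1n.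
rewrite !expnS.
have H1 : a * (a + k.+1) <= (a + 1) * (a + k) by nia.
have H3 := leq_mul (leqnn (a ^ k)) H1.
have H4 := leq_mul IH (leqnn (a + 1)).
move: H3 H4; set X := a ^ k; set Y := (a + 1) ^ k; clearbody X Y => H3 H4; nia.
Qed.

Lemma bern2 a : 2 * a ^ a.+1 <= (a + 1) ^ a.+1.
Proof.
case: a => [|a]; first by [].
have := bern a.+1 a.+2.
set X := a.+1 ^ a.+2; set Y := (a.+1 + 1) ^ a.+2; clearbody X Y => H; nia.
Qed.

Lemma ffact_le n k : n ^_ k <= n ^ k.
Proof.
elim: k => [|k IH]; first by [].
rewrite ffactnSr expnSr; apply: leq_mul => //; exact: leq_subr.
Qed.

Lemma expn_monoL m n e : m <= n -> m ^ e <= n ^ e.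
Proof. by case: e => [|e] // H; rewrite leq_exp2r. Qed.

Lemma ffact_ge n k : (n.+1 - k) ^ k <= n ^_ k.
Proof.
elim: k => [|k IH]; first by [].
rewrite ffactnSr expnSr subSS; apply: leq_mul => //.
apply: leq_trans IH; apply: expn_monoL; lia.
Qed.

Lemma mutual (A : finType) (H : A -> {set A}) d :
  (forall a, a \notin H a) -> (forall a, d <= #|H a|) -> 0 < #|A| ->
  #|A| <= 2 * d -> exists i j, j \in H i /\ i \in H j.
Proof.
move=> Hirr Hd HA HAd.
case: (boolP [exists i, exists j, (j \in H i) && (i \in H j)]).
  by move=> /existsP [i /existsP [j /andP [h1 h2]]]; exists i, j.
rewrite negb_exists => /forallP Hn.
have Hle : \sum_(i : A) \sum_(j : A) (((j \in H i) : nat) + ((i \in H j) : nat) + ((i == j) : nat))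
     <= \sum_(i : A) \sum_(j : A) 1.
  apply: leq_sum => i _; apply: leq_sum => j _.
  have := Hn i; rewrite negb_exists => /forallP /(_ j).
  case: eqP => [->|_]; first by rewrite (negbTE (Hirr j)).
  by case: (j \in H i); case: (i \in H j).
have E1 : forall i, \sum_(j : A) ((j \in H i) : nat) = #|H i|.
  by move=> i; rewrite -sum1_card [in RHS]big_mkcond; apply: eq_bigr => j _; case: (j \in H i).
have E3 : forall i : A, \sum_(j : A) ((i == j) : nat) = 1.
  move=> i; rewrite (bigD1 i) //= eqxx big1 // => j /negbTE.
  by rewrite eq_sym => ->.
have E4 : \sum_(i : A) \sum_(j : A) ((i \in H j) : nat) = \sum_(i : A) #|H i|.
  by rewrite exchange_big; apply: eq_bigr => i _; exact: E1.
move: Hle.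
under eq_bigr => i _ do rewrite big_split big_split /= E1 E3.
rewrite big_split big_split /= E4.
under [X in _ <= X]eq_bigr => i _ do rewrite sum1_card.
rewrite !sum1_card sum_nat_const.
have Hs : #|A| * d <= \sum_(i : A) #|H i|.
  rewrite -sum_nat_const; apply: leq_sum => i _; exact: Hd.
move: Hs; set S := \sum_(i : A) #|H i|; set n := #|A|; rewrite /= -/n.
move=> Hs Hle; exfalso; nia.
Qed.

Lemma greedy (A L : finType) (H : A -> {set A}) (R : A -> {set L}) d K l :
  (forall a, d <= #|H a|) -> (forall a x, x \in H a -> R a :&: R x = set0) ->
  (forall a, K <= #|R a|) -> l * (#|A| - d) < #|A| -> l.+1 * K <= #|L|.
Proof.
move=> Hd Hdis HK Hl.
have claim : forall j, j <= l.+1 -> exists (C : {set A}) (U : {set L}),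
    [/\ #|~: C| <= j * (#|A| - d), j * K <= #|U| &
        forall x, x \in C -> R x :&: U = set0].
  elim=> [|j IH] Hj.
    exists setT, set0; split; rewrite ?setCT ?cards0 ?mul0n //.
    by move=> x _; rewrite setI0.
  have [C [U [HC HU HCU]]] := IH (ltnW Hj).
  have : 0 < #|C|.
    have := cardsC C; have : j * (#|A| - d) <= l * (#|A| - d) by rewrite leq_mul2r -ltnS Hj orbT.
    move=> h1 h2; nia.
  case/card_gt0P => x Hx.
  exists (C :&: H x), (U :|: R x); split.
  - rewrite setCI; apply: leq_trans (leq_card_setU _ _) _.
    rewrite mulSnr; apply: leq_add => //.
    have := cardsC (H x); have := Hd x; lia.
  - rewrite cardsU setIC (HCU x Hx) cards0 subn0 mulSnr; apply: leq_add => //.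
  - move=> y; rewrite inE => /andP [HyC HyH].
    by rewrite setIUr (HCU y HyC) set0U setIC Hdis.
have [C [U [_ HU _]]] := claim l.+1 (leqnn _).
by apply: leq_trans HU (max_card _).
Qed.

Lemma ktt_count (A L : finType) (R : A -> {set L}) t K :
  (forall a, K <= #|R a|) -> t.-1 * 'C(#|L|, t) < #|A| * 'C(K, t) ->
  exists Y : {set L}, #|Y| = t /\ t.-1 < #|[set a | Y \subset R a]|.
Proof.
move=> HK Hlt.
case: (boolP [exists Y : {set L}, (#|Y| == t) && (t.-1 < #|[set a | Y \subset R a]|)]).
  by move=> /existsP [Y /andP [/eqP h1 h2]]; exists Y.
rewrite negb_exists => /forallP Hn; exfalso.
pose F (a : A) (Y : {set L}) : nat := ((Y \subset R a) && (#|Y| == t)).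
have Lo : #|A| * 'C(K, t) <= \sum_(a : A) \sum_(Y : {set L}) F a Y.
  rewrite -sum_nat_const; apply: leq_sum => a _.
  have -> : \sum_(Y : {set L}) F a Y = 'C(#|R a|, t).
    rewrite -cards_draws -sum1_card [in RHS]big_mkcond; apply: eq_bigr => Y _.
    by rewrite inE /F; case: (_ && _).
  exact: leq_bin2l.
have Up : \sum_(a : A) \sum_(Y : {set L}) F a Y <= t.-1 * 'C(#|L|, t).
  rewrite exchange_big /=.
  have -> : 'C(#|L|, t) = \sum_(Y : {set L}) ((#|Y| == t) : nat).
    by rewrite -card_draws -sum1_card [in LHS]big_mkcond; apply: eq_bigr => Y _; rewrite inE; case: (_ == _).
  rewrite big_distrr /=; apply: leq_sum => Y _.
  case: (boolP (#|Y| == t)) => HY.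
    rewrite muln1.
    have -> : \sum_(a : A) F a Y = #|[set a | Y \subset R a]|.
      rewrite -sum1_card [in RHS]big_mkcond; apply: eq_bigr => a _.
      by rewrite inE /F HY andbT; case: (_ \subset _).
    by have := Hn Y; rewrite HY /= -leqNgt.
  by rewrite muln0 big1 // => a _; rewrite /F (negbTE HY) andbF.
by have := leq_trans Lo Up; rewrite leqNgt Hlt.
Qed.

Definition Lset (m r : nat) := {X : {set 'I_m} | #|X| == r}.
Definition DL (m r t : nat) := (Lset m r * 'I_t)%type.
Definition dadj (m r t : nat) (a : 'I_m) (p : DL m r t) : bool := a \notin val p.1.

Lemma card_Lsub m r (H : {set 'I_m}) :
  #|[set X : Lset m r | val X \subset H]| = 'C(#|H|, r).
Proof.
rewrite -cards_draws -(card_imset _ val_inj); apply: eq_card => B.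
rewrite !inE; apply/imsetP/andP.
  by case=> X; rewrite inE => HX ->; split=> //; exact: (valP X).
by case=> HB Hc; exists (exist _ B Hc); rewrite ?inE.
Qed.

Lemma card_DLsub m r t (H : {set 'I_m}) :
  #|[set p : DL m r t | val p.1 \subset H]| = 'C(#|H|, r) * t.
Proof.
have -> : [set p : DL m r t | val p.1 \subset H] =
    setX [set X : Lset m r | val X \subset H] setT.
  by apply/setP=> -[X j]; rewrite !inE andbT.
by rewrite cardsX card_Lsub cardsT card_ord.
Qed.

Lemma card_DL m r t : #|{: DL m r t}| = 'C(m, r) * t.
Proof.
rewrite -cardsT.
have -> : [set: DL m r t] = [set p : DL m r t | val p.1 \subset setT].
  by apply/setP=> p; rewrite !inE subsetT.
by rewrite card_DLsub cardsT card_ord.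
Qed.

Lemma card_Nb m r t a : #|Nb (@dadj m r t) a| = 'C(m.-1, r) * t.
Proof.
have -> : Nb (@dadj m r t) a = [set p : DL m r t | val p.1 \subset [set~ a]].
  apply/setP=> p; rewrite !inE /dadj; apply/idP/subsetP.
    by move=> Ha x Hx; rewrite !inE; apply: contraNneq Ha => <-.
  by move=> Hs; apply/negP => /Hs; rewrite !inE eqxx.
by rewrite card_DLsub cardsC1 card_ord.
Qed.

Definition Hit m r t col (a : 'I_m) : {set 'I_m} :=
  [set x | [exists p in Rd (@dadj m r t) col a, x \in val p.1]].

Lemma Hit_irr m r t col (a : 'I_m) : a \notin Hit (r:=r) (t:=t) col a.
Proof.
rewrite inE; apply/negP => /existsP [p /andP [Hp Hx]].
by move: Hp; rewrite inE /dadj Hx.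
Qed.

Lemma Hit_large m r t col (a : 'I_m) D :
  'C(D, r) * t < #|Rd (@dadj m r t) col a| -> D < #|Hit col a|.
Proof.
move=> H; rewrite ltnNge; apply/negP => HD.
have : #|Rd (@dadj m r t) col a| <= 'C(#|Hit col a|, r) * t.
  rewrite -card_DLsub; apply: subset_leq_card; apply/subsetP => p Hp.
  rewrite inE; apply/subsetP => x Hx; rewrite inE; apply/existsP; exists p.
  by rewrite Hp.
move=> H2; have := leq_trans H H2; rewrite ltnNge leq_mul2r.
by rewrite (leq_bin2l r HD) orbT.
Qed.

Lemma Hit_wit m r t col (a x : 'I_m) : x \in Hit (r:=r) (t:=t) col a ->
  exists q, (q \in Rd (@dadj m r t) col a) /\ ~~ dadj x q.
Proof.
by rewrite inE => /existsP [p /andP [Hp Hx]]; exists p; rewrite /dadj Hx.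
Qed.

Lemma red_lb m r t col n (a : 'I_m) :
  #|Bl (@dadj m r t) col a| < n ->
  'C(m.-1, r) * t - n.-1 <= #|Rd (@dadj m r t) col a|.
Proof. move=> H; have := red_large H; rewrite card_Nb; lia. Qed.

Lemma design2K2 m r t n D : 0 < m -> m <= 2 * D.+1 ->
  'C(D, r) * t + n <= 'C(m.-1, r) * t ->
  ind_arrow (bip (@dadj m r t)) twoK2 (@star n).
Proof.
move=> Hm HmD Hc col Hcol.
case: (boolP [exists a, n <= #|Bl (@dadj m r t) col a|]).
  by move=> /existsP [a Ha]; right; exact: blue_star Ha.
rewrite negb_exists => /forallP Hn; left.
have HH : forall a, D.+1 <= #|Hit (r:=r) (t:=t) col a|.
  move=> a; apply: Hit_large; have := Hn a; rewrite -ltnNge => /red_lb.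
  have : 0 < n by move: (Hn a); clear; case: n.
  lia.
have := mutual (@Hit_irr m r t col) HH; rewrite card_ord => /(_ Hm HmD) [i [j [Hji Hij]]].
have [q [Hq Hjq]] := Hit_wit Hji.
have [q' [Hq' Hiq']] := Hit_wit Hij.
move: Hq Hq'; rewrite !inE => /andP [h1 h2] /andP [h3 h4].
apply: (red2K2 Hcol _ h1 h3 Hiq' Hjq h2 h4).
by apply/eqP => E; move: Hji; rewrite E (negbTE (Hit_irr _ _)).
Qed.

Lemma designP4 m r t n D w : w * (m - D.+1) < m ->
  'C(D, r) * t + n <= 'C(m.-1, r) * t ->
  'C(m, r) * t < w.+1 * ('C(m.-1, r) * t - n.-1) ->
  ind_arrow (bip (@dadj m r t)) P4 (@star n).
Proof.
move=> Hw Hc Hc2 col Hcol.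
case: (boolP [exists a, n <= #|Bl (@dadj m r t) col a|]).
  by move=> /existsP [a Ha]; right; exact: blue_star Ha.
rewrite negb_exists => /forallP Hn; left.
have Hm : 0 < m by lia.
have Hn0 : 0 < n by move: (Hn (Ordinal Hm)); clear; case: n.
have HR : forall a, 'C(m.-1, r) * t - n.-1 <= #|Rd (@dadj m r t) col a|.
  by move=> a; apply: red_lb; rewrite ltnNge; exact: Hn.
have HH : forall a, D.+1 <= #|Hit (r:=r) (t:=t) col a|.
  move=> a; apply: Hit_large; have := HR a; lia.
case: (boolP [exists a, exists x, (x \in Hit (r:=r) (t:=t) col a) &&
          (Rd (@dadj m r t) col a :&: Rd (@dadj m r t) col x != set0)]).
  move=> /existsP [a /existsP [x /andP [Hx /set0Pn [p]]]].
  rewrite !inE => /andP [/andP [h1 h2] /andP [h3 h4]].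
  have [q [Hq Hxq]] := Hit_wit Hx.
  move: Hq; rewrite inE => /andP [h5 h6].
  apply: (redP4 Hcol _ h5 h1 h3 Hxq h6 h2 h4).
  by apply/eqP => E; move: Hx; rewrite E (negbTE (Hit_irr _ _)).
rewrite negb_exists => /forallP Hno; exfalso.
have Hdis : forall a x, x \in Hit (r:=r) (t:=t) col a ->
    Rd (@dadj m r t) col a :&: Rd (@dadj m r t) col x = set0.
  move=> a x Hx; have := Hno a; rewrite negb_exists => /forallP /(_ x).
  by rewrite Hx /= negbK => /eqP.
have := greedy HH Hdis HR; rewrite card_ord card_DL => /(_ w Hw).
by rewrite leqNgt Hc2.
Qed.

Definition kadj (m N : nat) (a : 'I_m) (b : 'I_N) := true.

Lemma kttArrow m N t n : 0 < t ->
  t.-1 * 'C(N, t) < m * 'C(N - n.-1, t) ->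
  ind_arrow (bip (@kadj m N)) (@Ktt t) (@star n).
Proof.
move=> Ht Hc col Hcol.
case: (boolP [exists a, n <= #|Bl (@kadj m N) col a|]).
  by move=> /existsP [a Ha]; right; exact: blue_star Ha.
rewrite negb_exists => /forallP Hn; left.
have HR : forall a, N - n.-1 <= #|Rd (@kadj m N) col a|.
  move=> a; have := Hn a; rewrite -ltnNge => /red_large.
  have -> : #|Nb (@kadj m N) a| = N.
    by rewrite -[RHS]card_ord -cardsT; apply: eq_card => b; rewrite !inE.
  lia.
have := ktt_count HR; rewrite !card_ord => /(_ t Hc) [Y [HY HQ]].
apply: (redKtt (Q := [set a | Y \subset Rd (@kadj m N) col a]) (Y := Y) Hcol).
- by move: HQ; case: t Ht {Hc HY}.
- by rewrite HY.
- move=> a b; rewrite inE => /subsetP HS /HS; rewrite inE.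
  by [].
Qed.

Lemma bin_le_exp2 m r : 'C(m, r) <= 2 ^ m.
Proof.
have := cards_draws [set: 'I_m] r; rewrite cardsT card_ord => <-.
rewrite -[m in 2 ^ m](card_ord m) -cardsT -card_powerset.
by apply: subset_leq_card; apply/subsetP => A; rewrite !inE => /andP [].
Qed.

Lemma ratio_w w : 1 <= w -> 'C(w ^ 3 - w ^ 2, w ^ 2) * w <= 'C(w ^ 3, w ^ 2).
Proof.
move=> w1.
have h1 := @ratio_bin (w ^ 3 - w ^ 2) (w ^ 3) (w ^ 2) (leq_subr _ _).
have e1 : w ^ 3 - w ^ 2 = (w - 1) * w ^ 2.
  by rewrite mulnBl mul1n -expnS.
have e2 : w ^ 3 = w * w ^ 2 by rewrite -expnS.
move: h1; set X := 'C(_, _); set Y := 'C(_, _) => h1.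
move: h1; rewrite e1 e2 !expnMn !mulnA leq_pmul2r; last by rewrite !expn_gt0 w1.
rewrite leq_pmul2r ?expn_gt0 ?w1 // => h1.
have h2 : 2 ^ w * (w - 1) ^ (w ^ 2) <= w ^ (w ^ 2).
  have := bern2 (w - 1).
  have -> : (w - 1).+1 = w by rewrite subn1 prednK.
  rewrite subnK // => h; have := expn_monoL w h.
  by rewrite expnMn -!expnM mulnn.
have h3 : X * 2 ^ w <= Y.
  rewrite -(@leq_pmul2r (w ^ w ^ 2)) ?expn_gt0 ?w1 //.
  have h4 := leq_mul (leqnn Y) h2.
  have h5 := leq_mul h1 (leqnn (2 ^ w)).
  move: h1 h4 h5; set Z := w ^ w ^ 2; set Z' := (w - 1) ^ w ^ 2; set T := 2 ^ w.
  clearbody Z Z' T => h1 h4 h5; nia.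
apply: leq_trans h3; rewrite leq_mul2l ltnW ?orbT //; exact: ltn_expl.
Qed.

Lemma g4 (B Cm t n q w P W2 W3 : nat) :
  n < q * B -> q * (w + 2) <= t * w -> W3.+1 * B = P * Cm -> P + W2 = W3.+1 ->
  W3 = W2 * w -> W2 = w * w -> 4 <= w -> n <= B * t -> 0 < n ->
  Cm * t < w.+1 * (B * t - n.-1).
Proof.
move=> hq1 ht1 hF2 eP eW3 eW2 w4 hG3 hn.
have k1 : 4 * W2 <= W3 by rewrite eW3 mulnC leq_mul2l w4 orbT.
have k2 : 4 * w <= W2 by rewrite eW2 leq_mul2r w4 orbT.
have hPW : W2 + 2 * w <= P by lia.
have hXP : W2 <= w * P.
  have : 1 * P <= w * P by rewrite leq_mul2r (leq_trans _ w4) ?orbT.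
  lia.
pose X := w * P - W2.
have eX : X + W2 = w * P by rewrite /X subnK.
clearbody X.
have a2 : w * w.+1 * P <= (w + 2) * X.
  have b1 : w * (W2 + 2 * w) <= w * P by rewrite leq_mul2l hPW orbT.
  have b2 : (w + 2) * X + (w + 2) * W2 = (w + 2) * (w * P) by rewrite -mulnDr eX.
  rewrite eW2 in b1 b2. lia.
have a1 := leq_mul ht1 (leqnn (B * X)).
have a2' := leq_mul (leqnn (B * q)) a2.
have a3 := leq_mul hq1 (leqnn (w * w.+1 * P)).
have a4 : n.+1 * w.+1 * P <= B * t * X.
  rewrite -(@leq_pmul2r w) ?(leq_trans _ w4) //. lia.
have a5 : B * t * X + B * t * W2 = B * t * w * P by rewrite -mulnDr eX mulnA.
have a6 : P * (Cm * t) < P * (w.+1 * (B * t - n.-1)).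
  have a7 : P * Cm * t = W3.+1 * B * t by rewrite hF2.
  have a8 : W3.+1 * B * t = P * (B * t) + W2 * (B * t) by rewrite -eP; lia.
  pose Z := B * t - n.-1.
  have eZ : Z + n.-1 = B * t by rewrite /Z subnK //; lia.
  rewrite -/Z; clearbody Z.
  have a9 : P * w.+1 * Z + P * w.+1 * n.-1 = P * w.+1 * (B * t) by rewrite -mulnDr eZ.
  have a11 : P * w.+1 * n.-1 + P * w.+1 * 2 = P * w.+1 * n.+1 by rewrite -mulnDr; congr (_ * _); lia.
  have hP : 0 < P by lia.
  have a12 : 0 < P * w.+1 by rewrite muln_gt0 hP.
  lia.
by rewrite ltn_mul2l in a6; case/andP: a6.
Qed.

Lemma g5 (B Cm t n q w P W2 W3 : nat) :
  q * B <= n + B -> t * w <= q * (w + 2) + w -> W3.+1 * B = P * Cm -> P + W2 = W3.+1 ->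
  W3 = W2 * w -> W2 = w * w -> 4 <= w -> Cm * w <= n -> W3.+1 * w <= n ->
  (W3.+1 + Cm * t) * w <= n * w + 9 * n.
Proof.
move=> hq2 ht2 hF2 eP eW3 eW2 w4 hCm hm.
have k1 : 4 * W2 <= W3 by rewrite eW3 mulnC leq_mul2l w4 orbT.
have c0 : W3.+1 * w <= (w + 2) * P by lia.
have b1 := leq_mul hq2 (leqnn W3.+1).
have hF2q := congr1 (muln q) hF2.
have b1' : Cm * q * P <= n * W3.+1 + Cm * P by lia.
have b2 := leq_mul b1' (leqnn w).
have b2' := leq_mul (leqnn n) c0.
have b2'' : Cm * q * w * P <= (n * (w + 2) + Cm * w) * P by lia.
have hP : 0 < P by lia.
rewrite leq_pmul2r // in b2''.
have b3 := leq_mul ht2 (leqnn (Cm * w)).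
have b3' := leq_mul b2'' (leqnn (w + 2)).
have b4 := leq_mul hCm (leqnn (w + 2)).
have b5 := leq_mul hCm (leqnn w).
have b6 := leq_mul hm (leqnn w).
have b7 := leq_mul (leqnn n) w4.
rewrite -(@leq_pmul2r w) ?(leq_trans _ w4) //.
lia.
Qed.

Lemma g3 (B Cd t n q w : nat) :
  q * (w + 2) <= t * w -> n < q * B -> Cd * w <= B -> 4 <= w ->
  Cd * t + n <= B * t.
Proof.
move=> ht1 hq1 hCd w4.
have ew : w = (w - 1).+1 by lia.
move: ht1 hCd; rewrite ew; set v := w - 1; have hv : 3 <= v by lia.
clearbody v => ht1 hCd.
have f1 := leq_mul ht1 (leqnn (B * v)).
have f2 := leq_mul hq1 (leqnn ((v.+1 + 2) * v)).
have f3 : n.+1 * (v.+1 * v.+1) <= n.+1 * ((v.+1 + 2) * v) by rewrite leq_mul2l; nia.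
have f4 := leq_mul hCd (leqnn (t * v.+1)).
suff : (Cd * t + n) * (v.+1 * v.+1) < B * t * (v.+1 * v.+1) + v.+1 * v.+1.
  rewrite -mulSnr ltn_mul2r; case/andP => _; lia.
lia.
Qed.

Lemma params w n : 4 <= w -> 2 ^ (w ^ 4) <= n ->
  exists t, [/\ (w ^ 3).+1 <= 2 * (w ^ 3 - w ^ 2).+1,
     w * ((w ^ 3).+1 - (w ^ 3 - w ^ 2).+1) < (w ^ 3).+1,
     'C(w ^ 3 - w ^ 2, w ^ 2) * t + n <= 'C((w ^ 3).+1.-1, w ^ 2) * t,
     'C((w ^ 3).+1, w ^ 2) * t < w.+1 * ('C((w ^ 3).+1.-1, w ^ 2) * t - n.-1) &
     ((w ^ 3).+1 + 'C((w ^ 3).+1, w ^ 2) * t) * w <= n * w + 9 * n].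
Proof.
move=> w4 hn.
have eW2 : w ^ 2 = w * w by rewrite expnS expn1.
have eW3 : w ^ 3 = w ^ 2 * w by rewrite expnSr.
have eW4 : w ^ 4 = w ^ 3 * w by rewrite expnSr.
have hB : 0 < 'C(w ^ 3, w ^ 2) by rewrite bin_gt0 leq_pexp2l // (leq_trans _ w4).
have hCd := ratio_w (leq_trans (isT : 1 <= 4) w4).
have hF2 := mul_bin_down (w ^ 3).+1 (w ^ 2).
have hCm0 := bin_le_exp2 (w ^ 3).+1 (w ^ 2).
have hw2 := ltn_expl w (isT : 1 < 2).
have hm2 := ltn_expl (w ^ 3).+1 (isT : 1 < 2).
have hexp : 2 ^ (w ^ 3).+1 * 2 ^ w <= n.
  rewrite -expnD; apply: leq_trans hn; rewrite leq_exp2l //.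
  rewrite eW4 eW3 eW2; nia.
move: hB hCd hF2 hCm0 hexp.
rewrite /=.
set B := 'C(w ^ 3, w ^ 2); set Cd := 'C(w ^ 3 - w ^ 2, w ^ 2); set Cm := 'C((w ^ 3).+1, w ^ 2).
set W2 := w ^ 2; set W3 := w ^ 3; set E1 := 2 ^ W3.+1; set E2 := 2 ^ w.
move=> hB hCd hF2 hCm0 hexp.
have eW2' : W2 = w * w by rewrite /W2 eW2.
have eW3' : W3 = W2 * w by rewrite /W3 eW3.
have hCm : Cm * w <= n.
  apply: leq_trans hexp; apply: leq_mul => //; exact: ltnW.
have hm : W3.+1 * w <= n.
  apply: leq_trans hexp; apply: leq_mul; exact: ltnW.
pose q := (n %/ B).+1.
pose t := q + (2 * q) %/ w + 1.
have hq1 : n < q * B by apply: ltn_ceil.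
have hq2 : q * B <= n + B by rewrite /q mulSn addnC leq_add2r leq_divM.
have ht1 : q * (w + 2) <= t * w.
  have := ltn_ceil (2 * q) (leq_trans (isT : 0 < 4) w4); rewrite /t; nia.
have ht2 : t * w <= q * (w + 2) + w.
  have := leq_divM (2 * q) w; rewrite /t; nia.
exists t.
move: hq1 hq2 ht1 ht2; clearbody q t.
clearbody B Cd Cm E1 E2 W2 W3 => hq1 hq2 ht1 ht2.
have hW : W2 <= W3 by rewrite eW3'; nia.
pose P := W3.+1 - W2.
have eP : P + W2 = W3.+1 by rewrite /P; lia.
move: hF2; rewrite -/P => hF2; clearbody P.
have k1 : 4 * W2 <= W3 by rewrite eW3' mulnC leq_mul2l w4 orbT.
have k2 : 4 * w <= W2 by rewrite eW2' leq_mul2r w4 orbT.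
have hn0 : 0 < n by lia.
have G3 := g3 ht1 hq1 hCd w4.
split.
- lia.
- have -> : W3.+1 - (W3 - W2).+1 = W2 by lia.
  rewrite eW3' mulnC; lia.
- exact: G3.
- apply: (g4 hq1 ht1 hF2 eP eW3' eW2' w4 _ hn0); lia.
- exact: (g5 hq2 ht2 hF2 eP eW3' eW2' w4 hCm hm).
Qed.

Lemma kparams t n g : 2 <= t -> t <= g -> 0 < n ->
  t.-1 * 'C(n + (n %/ g + t), t) <
    (t * (2 * g) ^ t) * 'C(n + (n %/ g + t) - n.-1, t).
Proof.
move=> t2 tg n0.
have g0 : 0 < g by lia.
have eK : n + (n %/ g + t) - n.-1 = (n %/ g + t).+1.
  move: (n %/ g) => d; lia.
rewrite eK.
set N := n + (n %/ g + t); set K := (n %/ g + t).+1.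
have hN : N <= 2 * g * (n %/ g + 2).
  have := divn_eq n g; have := ltn_pmod n g0.
  rewrite /N; set d := n %/ g; set rr := n %% g; clearbody d rr.
  have : d <= d * g by rewrite leq_pmulr.
  lia.
have hK : n %/ g + 2 <= K.+1 - t by rewrite /K; lia.
have f1 : 'C(N, t) * t`! <= N ^ t by rewrite bin_ffact; exact: ffact_le.
have f2 : (n %/ g + 2) ^ t <= 'C(K, t) * t`!.
  rewrite bin_ffact; apply: leq_trans (ffact_ge K t); exact: expn_monoL.
have f3 : N ^ t <= (2 * g) ^ t * (n %/ g + 2) ^ t by rewrite -expnMn; exact: expn_monoL.
have Z0 : 0 < (n %/ g + 2) ^ t by rewrite expn_gt0 addn_gt0 orbT.
have G0 : 0 < (2 * g) ^ t by rewrite expn_gt0; apply/orP; left; lia.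
suff H : t.-1 * 'C(N, t) * t`! < t * (2 * g) ^ t * 'C(K, t) * t`!.
  by rewrite ltn_pmul2r ?fact_gt0 in H.
have f4 := leq_mul (leqnn (t * (2 * g) ^ t)) f2.
have f5 := leq_mul (leqnn t.-1) (leq_trans f1 f3).
move: f4 f5 Z0 G0; set X := (n %/ g + 2) ^ t; set Y := (2 * g) ^ t.
set C1 := 'C(N, t); set C2 := 'C(K, t); set F := t`!.
move=> f4 f5 Z0 G0.
have h2 : 0 < Y * X by rewrite muln_gt0 Z0 G0.
have et : t = t.-1.+1 by lia.
move: f4 f5; rewrite et; set s := t.-1; clearbody s X Y C1 C2 F => f4 f5.
lia.
Qed.
Open Scope R_scope.

Lemma INR_leq (a b : nat) : (a <= b)%N -> INR a <= INR b.
Proof. by move=> /leP; apply: le_INR. Qed.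

Lemma INR_ltn (a b : nat) : (a < b)%N -> INR a < INR b.
Proof. by move=> /ltP; apply: lt_INR. Qed.

Lemma INR_muln (a b : nat) : INR (a * b) = INR a * INR b.
Proof. by rewrite -mult_INR. Qed.

Lemma INR_addn (a b : nat) : INR (a + b) = INR a + INR b.
Proof. by rewrite -plus_INR. Qed.

Lemma INR_expn (a b : nat) : INR (expn a b) = INR a ^ b.
Proof.
elim: b => [|b IH]; first by rewrite expn0.
by rewrite expnS INR_muln IH.
Qed.

Lemma ln2_lt1 : ln 2 < 1.
Proof.
rewrite -[X in _ < X]ln_exp; apply: ln_increasing; first lra.
have := exp_ineq1 1 ltac:(lra); lra.
Qed.

Lemma inv_w_bound (n w : nat) : (1 <= w)%N -> (2 <= n)%N ->
  (n < expn 2 (expn w.+1 4))%N ->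
  / INR w <= 2 * Rpower (ln (INR n)) (- (1 / 4)).
Proof.
move=> w1 n2 hn.
have hw : 1 <= INR w by apply: (INR_leq w1).
have hn' : 2 <= INR n by apply: (INR_leq n2).
have lnpos : 0 < ln (INR n).
  rewrite -ln_1; apply: ln_increasing; lra.
pose z := Rpower (ln (INR n)) (1 / 4).
have zpos : 0 < z by rewrite /z /Rpower; apply: exp_pos.
have z4 : z ^ 4 = ln (INR n).
  rewrite -Rpower_pow // /z Rpower_mult.
  have -> : 1 / 4 * INR 4 = 1 by simpl; field.
  by rewrite Rpower_1.
have lnb : ln (INR n) < (2 * INR w) ^ 4.
  have h1 := INR_ltn hn; rewrite INR_expn /= in h1.
  have h2 : ln (INR n) < ln (2 ^ expn w.+1 4).
    apply: ln_increasing => //; lra.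
  rewrite ln_pow in h2; last lra.
  rewrite INR_expn in h2.
  have h3 : INR w.+1 ^ 4 <= (2 * INR w) ^ 4.
    apply: pow_incr; rewrite S_INR; lra.
  have h4 : 0 < INR w.+1 ^ 4 by apply: pow_lt; apply: lt_0_INR; apply/ltP.
  have := ln2_lt1; nra.
have zb : z <= 2 * INR w.
  apply: Rnot_lt_le => H.
  have : (2 * INR w) ^ 4 <= z ^ 4 by apply: pow_incr; lra.
  lra.
rewrite Rpower_Ropp -/z.
have -> : / INR w = 2 * / (2 * INR w) by field; lra.
apply: Rmult_le_compat_l; first lra.
by apply: Rinv_le_contravar.
Qed.

Lemma pow_lt_base (x z : R) (k : nat) : 0 <= x -> x < z -> (0 < k)%N -> x ^ k < z ^ k.
Proof.
move=> hx hxz; elim: k => [|k IH] // _.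
case: k IH => [|k] IH; first by rewrite /= !Rmult_1_r.
have := IH isT; rewrite -!tech_pow_Rmult => h.
have : 0 <= x * x ^ k by apply: Rmult_le_pos => //; apply: pow_le.
nra.
Qed.

Lemma ktt_real (t n g : nat) : (1 <= t)%N -> (1 <= g)%N ->
  (expn g (2 * t) <= n)%N -> (n < expn g.+1 (2 * t))%N ->
  INR (t * expn (2 * g) t + (n + (n %/ g + t))) <=
    INR n + (INR t * 2 ^ t + 2 + INR t) * Rpower (INR n) (1 - 1 / (2 * INR t)).
Proof.
move=> t1 g1 hg1 hg2.
have ht : 1 <= INR t by apply: (INR_leq t1).
have hg : 1 <= INR g by apply: (INR_leq g1).
have hn : 1 <= INR n.
  apply: (INR_leq (a := 1)); apply: leq_trans hg1; by rewrite expn_gt0 g1.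
have npos : 0 < INR n by lra.
pose y := Rpower (INR n) (1 / (2 * INR t)).
pose E := Rpower (INR n) (1 - 1 / (2 * INR t)).
have ypos : 0 < y by rewrite /y /Rpower; apply: exp_pos.
have Epos : 0 < E by rewrite /E /Rpower; apply: exp_pos.
have Ey : E * y = INR n.
  rewrite /E /y -Rpower_plus.
  have -> : 1 - 1 / (2 * INR t) + 1 / (2 * INR t) = 1 by field; lra.
  by rewrite Rpower_1.
have y2t : y ^ (2 * t) = INR n.
  rewrite -Rpower_pow // /y Rpower_mult.
  have -> : 1 / (2 * INR t) * INR (2 * t) = 1 by rewrite INR_muln /=; field; lra.
  by rewrite Rpower_1.
have H1 := INR_leq hg1; rewrite INR_expn in H1.
have H2 := INR_ltn hg2; rewrite INR_expn S_INR in H2.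
have t0 : (2 * t)%N <> 0%N by lia.
have gy : INR g <= y.
  apply: Rnot_lt_le => H.
  have : y ^ (2 * t) < INR g ^ (2 * t) by apply: pow_lt_base => //; [lra | lia].
  lra.
have yg : y < INR g + 1.
  apply: Rnot_le_lt => H.
  have : (INR g + 1) ^ (2 * t) <= y ^ (2 * t) by apply: pow_incr; lra.
  lra.
have y1 : 1 <= y by lra.
have gtE : INR g ^ t <= E.
  apply: (Rmult_le_reg_r y) => //; rewrite Ey -y2t.
  have a1 : INR g ^ t <= y ^ t by apply: pow_incr; lra.
  have a2 : y ^ t * y <= y ^ (2 * t).
    rewrite Rmult_comm tech_pow_Rmult; apply: Rle_pow => //; apply/leP; lia.
  have a3 : 0 <= INR g ^ t by apply: pow_le; lra.
  nra.
have E1 : 1 <= E.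
  apply: (Rmult_le_reg_r y) => //; rewrite Ey -y2t Rmult_1_l.
  have h : y ^ 1 <= y ^ (2 * t) by apply: Rle_pow => //; apply/leP; lia.
  by rewrite /= Rmult_1_r in h.
have ngE : INR (n %/ g) <= 2 * E.
  have h := INR_leq (leq_divM n g); rewrite INR_muln in h.
  have gpos : 0 < INR g by lra.
  apply: (Rmult_le_reg_r (INR g)) => //.
  nra.
rewrite !INR_addn INR_muln INR_expn INR_muln Rpow_mult_distr.
have p1 : INR t * (INR 2 ^ t * INR g ^ t) <= INR t * 2 ^ t * E.
  rewrite -Rmult_assoc; apply: Rmult_le_compat_l; last exact: gtE.
  apply: Rmult_le_pos; [lra | apply: pow_le; simpl; lra].
have p2 : INR t <= INR t * E by nra.
simpl INR in p1 |- *.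
rewrite -/E; lra.
Qed.

Lemma final_A (M n w rho c : R) : 1 <= w -> 0 <= n -> M * w <= n * w + 9 * n ->
  / w <= 2 * rho -> 18 <= c -> M <= n + c * n * rho.
Proof.
move=> hw hn hM hr hc.
have wpos : 0 < w by lra.
have iw : 0 < / w by apply: Rinv_0_lt_compat.
have rpos : 0 <= rho by lra.
have h1 : M <= n + 9 * n * / w.
  apply: (Rmult_le_reg_r w) => //.
  have -> : (n + 9 * n * / w) * w = n * w + 9 * n by field; lra.
  lra.
have h2 : 9 * n * / w <= 9 * n * (2 * rho) by apply: Rmult_le_compat_l; lra.
have h3 : 18 * n * rho <= c * n * rho.
  apply: Rmult_le_compat_r => //; apply: Rmult_le_compat_r; lra.
lra.
Qed.
Close Scope R_scope.

Theorem theorem3 (t : nat) (ht : (2 <= t)%N) :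
  exists c : R, (0 < c)%R /\
  exists n0 : nat, forall n : nat, (n0 < n)%N ->
    IR_le twoK2 (@star n)
      (INR n + c * INR n * Rpower (ln (INR n)) (- (1 / 4)))%R /\
    IR_le P4 (@star n)
      (INR n + c * INR n * Rpower (ln (INR n)) (- (1 / 4)))%R /\
    IR_le (@Ktt t) (@star n)
      (INR n + c * Rpower (INR n) (1 - 1 / (2 * INR t)))%R.
Proof.
have ht0 : (0 <= INR t)%R by apply: pos_INR.
have h2t : (0 <= 2 ^ t)%R by apply: pow_le; lra.
have htt : (0 <= INR t * 2 ^ t)%R by apply: Rmult_le_pos.
exists (18 + INR t * 2 ^ t + INR t + 2)%R; split; first lra.
exists (expn 2 (expn 4 4) + expn t.+1 (2 * t))%N => n hn.
have hn1 : (expn 2 (expn 4 4) <= n)%N by apply: leq_trans (ltnW hn); apply: leq_addr.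
have hn2 : (expn t.+1 (2 * t) <= n)%N by apply: leq_trans (ltnW hn); apply: leq_addl.
have hn4 : (4 <= n)%N.
  by apply: leq_trans hn1; rewrite -[4%N]/(expn 2 2) leq_exp2l.
have nR : (0 <= INR n)%R by apply: pos_INR.
have ex0 : exists i, (expn 2 (expn i 4) <= n)%N by exists 0%N; rewrite exp0n // expn0; lia.
have ub : forall i, (expn 2 (expn i 4) <= n)%N -> (i <= n)%N.
  move=> i hi; apply: (leq_trans _ hi); apply: leq_trans (ltnW (ltn_expl (expn i 4) (isT : (1 < 2)%N))).
  clear hi; case: i => [|i] //; rewrite -[X in (X <= _)%N]expn1; apply: leq_pexp2l => //.
case: (ex_maxnP ex0 ub) => w Hw Hmax.
have w4 : (4 <= w)%N by apply: Hmax.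
have wub : (n < expn 2 (expn w.+1 4))%N.
  by rewrite ltnNge; apply/negP => /Hmax; rewrite ltnn.
have [t0 [c1 c2 c3 c4 c5]] := params w4 Hw.
have hrho := inv_w_bound (ltnW (leq_trans (isT : (1 < 4)%N) w4)) (leq_trans (isT : (2 <= 4)%N) hn4) wub.
have hM : (INR ((w ^ 3).+1 + 'C((w ^ 3).+1, w ^ 2) * t0) * INR w <= INR n * INR w + 9 * INR n)%R.
  rewrite -INR_muln (_ : (9 * INR n = INR (9 * n))%R); last by rewrite INR_muln; simpl; ring.
  rewrite -INR_muln -INR_addn; exact: INR_leq c5.
have hw1 : (1 <= INR w)%R by apply: (INR_leq (a := 1)); lia.
have Hbound : (INR #|{: 'I_(w ^ 3).+1 + DL (w ^ 3).+1 (w ^ 2) t0}| <=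
     INR n + (18 + INR t * 2 ^ t + INR t + 2) * INR n * Rpower (ln (INR n)) (- (1 / 4)))%R.
  rewrite card_sum card_ord card_DL.
  apply: final_A hw1 nR hM hrho _; lra.
split; [|split].
- apply: (transfer (bip_simple _) _ Hbound).
  exact: (design2K2 (m := (w ^ 3).+1) (r := w ^ 2) (t := t0) (D := w ^ 3 - w ^ 2)).
- apply: (transfer (bip_simple _) _ Hbound).
  exact: (designP4 (m := (w ^ 3).+1) (r := w ^ 2) (t := t0) (D := w ^ 3 - w ^ 2) c2 c3 c4).
- have ex1 : exists i, (expn i (2 * t) <= n)%N.
    by exists 0%N; rewrite exp0n //; lia.
  have ub1 : forall i, (expn i (2 * t) <= n)%N -> (i <= n)%N.
    move=> i hi; apply: (leq_trans _ hi); clear hi.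
    case: i => [|i] //; rewrite -[X in (X <= _)%N]expn1; apply: leq_pexp2l => //; lia.
  case: (ex_maxnP ex1 ub1) => g Hg Hgmax.
  have gt : (t.+1 <= g)%N by apply: Hgmax.
  have gub : (n < expn g.+1 (2 * t))%N.
    by rewrite ltnNge; apply/negP => /Hgmax; rewrite ltnn.
  have Hb := ktt_real (ltnW ht) (leq_trans (isT : (0 < t.+1)%N) gt) Hg gub.
  have Hbound2 : (INR #|{: 'I_(t * expn (2 * g) t) + 'I_(n + (n %/ g + t))}| <=
      INR n + (18 + INR t * 2 ^ t + INR t + 2) * Rpower (INR n) (1 - 1 / (2 * INR t)))%R.
    rewrite card_sum !card_ord; apply: (Rle_trans _ _ _ Hb).
    have : (0 < Rpower (INR n) (1 - 1 / (2 * INR t)))%R by rewrite /Rpower; apply: exp_pos.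
    nra.
  apply: (transfer (bip_simple _) _ Hbound2).
  apply: kttArrow; first lia.
  apply: kparams => //; lia.
Qed.
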